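(* Let $\mathcal{H}$ be a complex Hilbert space of finite dimension $n\ge2$, $m\ge 2$, let $\sigma$ be a self-adjoint operator on $\mathcal{H}$ with spectral decomposition $\sigma=\sum_j s_j\Pi_j$ (the $s_j$ pairwise distinct, $\Pi_j$ the orthogonal spectral projectors), and define $\Pi_{\rm sym}=\sum_j\Pi_j^{\otimes m}$. A density operator $\rho$ on $\mathcal{H}^{\otimes m}$ is in single $\sigma$-measurement consensus ($\sigma$SMC) if and only if $\mathrm{Tr}(\Pi_{\rm sym}\rho)=1$, which is equivalent to $\Pi_{\rm sym}\rho\Pi_{\rm sym}=\Pi_{\rm sym}\rho=\rho$.
   Context: For $X$ an operator on $\mathcal{H}$, $X^{(i)}=I^{\otimes(i-1)}\otimes X\otimes I^{\otimes(m-i)}$. $\rho$ is in $\sigma$SMC if $\mathrm{Tr}(\Pi_j^{(k)}\Pi_j^{(\ell)}\rho)=\mathrm{Tr}(\Pi_j^{(\ell)}\rho)$ for all $k,\ell\in\{1,\dots,m\}$ and all $j$. *)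

(* Defs.v *)
From HB Require Import structures.
From mathcomp Require Import all_boot all_order all_algebra.
Set Implicit Arguments. Unset Strict Implicit. Unset Printing Implicit Defensive.
Import Order.TTheory GRing.Theory Num.Theory.
Local Open Scope ring_scope.

Section Defs.
Variable C : numClosedFieldType.

Definition adjmx (p q : nat) (A : 'M[C]_(p, q)) : 'M[C]_(q, p) :=
  (map_mx Num.conj A)^T.

Definition herm_mx (p : nat) (A : 'M[C]_p) : Prop := adjmx A = A.

Definition orth_proj (p : nat) (A : 'M[C]_p) : Prop :=
  herm_mx A /\ A *m A = A.

Definition psd_mx (p : nat) (A : 'M[C]_p) : Prop :=
  herm_mx A /\ forall v : 'cV[C]_p, 0 <= (adjmx v *m A *m v) 0 0.

Definition density_mx (p : nat) (A : 'M[C]_p) : Prop := psd_mx A /\ \tr A = 1.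

(* Product basis of H^{⊗m}, H = C^n: basis vectors e_{a 0} ⊗ ... ⊗ e_{a (m-1)},
   indexed by a : {ffun 'I_m -> 'I_n}. *)
Definition tidx (n m : nat) := {ffun 'I_m -> 'I_n}.
Definition tdim (n m : nat) := #|{: tidx n m}|.

Definition tens (n m : nat) (X : 'I_m -> 'M[C]_n) : 'M[C]_(tdim n m) :=
  \matrix_(a, b) \prod_(l < m) X l ((enum_val a : tidx n m) l) ((enum_val b : tidx n m) l).

(* X^{(i)} = I^{⊗ i} ⊗ X ⊗ I^{⊗ (m-1-i)}  (0-based tensor slot i : 'I_m). *)
Definition slot (n m : nat) (X : 'M[C]_n) (i : 'I_m) : 'M[C]_(tdim n m) :=
  tens (fun l => if l == i then X else 1%:M).

Definition tpow (n m : nat) (X : 'M[C]_n) : 'M[C]_(tdim n m) :=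
  tens (fun _ : 'I_m => X).

Definition spectral_decomp (n K : nat) (sigma : 'M[C]_n)
    (s : 'I_K -> C) (P : 'I_K -> 'M[C]_n) : Prop :=
  [/\ (forall j, s j \is Num.real) /\ injective s,
      forall j, orth_proj (P j) /\ P j != 0,
      forall i j, i != j -> P i *m P j = 0,
      \sum_j P j = 1%:M &
      sigma = \sum_j s j *: P j].

Definition Pi_sym (n m K : nat) (P : 'I_K -> 'M[C]_n) : 'M[C]_(tdim n m) :=
  \sum_j tpow m (P j).

Definition sigmaSMC (n m K : nat) (P : 'I_K -> 'M[C]_n)
    (rho : 'M[C]_(tdim n m)) : Prop :=
  forall (k l : 'I_m) (j : 'I_K),
    \tr (slot (P j) k *m slot (P j) l *m rho) = \tr (slot (P j) l *m rho).

End Defs.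

(* Main.v *)
Require Import Defs.
From HB Require Import structures.
From mathcomp Require Import all_boot all_order all_algebra ring.
Import Order.TTheory GRing.Theory Num.Theory.
Local Open Scope ring_scope.
Set Implicit Arguments. Unset Strict Implicit. Unset Printing Implicit Defensive.

Section Gen.
Variable C : numClosedFieldType.

Lemma adjmxM p q r (A : 'M[C]_(p,q)) (B : 'M[C]_(q,r)) :
  adjmx (A *m B) = adjmx B *m adjmx A.
Proof. by rewrite /adjmx map_mxM trmx_mul. Qed.

Lemma adjmxD p q (A B : 'M[C]_(p,q)) : adjmx (A + B) = adjmx A + adjmx B.
Proof. by rewrite /adjmx map_mxD linearD. Qed.

Lemma adjmxZ p q (c : C) (A : 'M[C]_(p,q)) : adjmx (c *: A) = c^* *: adjmx A.
Proof. by apply/matrixP=> i j; rewrite !mxE rmorphM. Qed.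

Lemma adjmxK p q (A : 'M[C]_(p,q)) : adjmx (adjmx A) = A.
Proof. by apply/matrixP=> i j; rewrite !mxE conjCK. Qed.

Lemma adjmxE p q (A : 'M[C]_(p,q)) i j : adjmx A i j = (A j i)^*.
Proof. by rewrite !mxE. Qed.

Lemma adjmx_sum p q (I : finType) (F : I -> 'M[C]_(p,q)) :
  adjmx (\sum_i F i) = \sum_i adjmx (F i).
Proof.
apply/matrixP=> i j; rewrite !mxE summxE rmorph_sum summxE; apply: eq_bigr=> k _; by rewrite !mxE.
Qed.

Lemma adjmx1 p : adjmx (1%:M : 'M[C]_p) = 1%:M.
Proof. by apply/matrixP=> i j; rewrite !mxE eq_sym; case: eqP; rewrite ?conjC0 ?conjC1. Qed.

Definition fo p (M : 'M[C]_p) (x y : 'cV[C]_p) := (adjmx x *m M *m y) 0 0.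

Lemma fo_sym p (M : 'M[C]_p) x y : herm_mx M -> fo M y x = (fo M x y)^*.
Proof.
move=> hM; rewrite /fo.
have -> : (adjmx y *m M *m x) = adjmx (adjmx x *m M *m y).
  by rewrite !adjmxM adjmxK hM mulmxA.
by rewrite adjmxE.
Qed.


Lemma foDl p (M : 'M[C]_p) x1 x2 y : fo M (x1 + x2) y = fo M x1 y + fo M x2 y.
Proof. by rewrite /fo adjmxD !mulmxDl mxE. Qed.
Lemma foDr p (M : 'M[C]_p) x y1 y2 : fo M x (y1 + y2) = fo M x y1 + fo M x y2.
Proof. by rewrite /fo !mulmxDr mxE. Qed.
Lemma foZl p (M : 'M[C]_p) c x y : fo M (c *: x) y = c^* * fo M x y.
Proof. by rewrite /fo adjmxZ -!scalemxAl mxE. Qed.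
Lemma foZr p (M : 'M[C]_p) c x y : fo M x (c *: y) = c * fo M x y.
Proof. by rewrite /fo -!scalemxAr mxE. Qed.

Lemma fo_delta p (M : 'M[C]_p) k y : fo M (delta_mx k 0) y = (M *m y) k 0.
Proof.
rewrite /fo.
have -> : adjmx (delta_mx k 0 : 'cV[C]_p) = delta_mx 0 k.
  by apply/matrixP=> i j; rewrite !mxE conjC_nat andbC.
by rewrite -mulmxA -rowE mxE.
Qed.

Lemma psd_null p (M : 'M[C]_p) (a : 'cV[C]_p) :
  psd_mx M -> fo M a a = 0 -> M *m a = 0.
Proof.
move=> [hM pM] haa; apply/matrixP=> k z; rewrite (ord1 z) mxE.
set e : 'cV[C]_p := delta_mx k 0.
set c := (M *m a) k 0.
have hea : fo M e a = c by rewrite fo_delta.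
have hae : fo M a e = c^* by rewrite fo_sym // hea.
set b := fo M e e.
have b0 : 0 <= b := pM e.
have bR : b \is Num.real by apply: ger0_real.
set l := b + 1.
have lR : l^* = l by apply: conj_Creal; rewrite rpredD ?real1.
have := pM (l *: a + (- c) *: e).
rewrite -/(fo M _ _) foDl !foDr !foZl !foZr haa hea hae -/b lR rmorphN /=.
have -> : l * (l * 0) + l * (- c * c^*) + ((- c^*) * (l * c) + - c^* * (- c * b))
          = (c * c^*) * (- (b + 2)).
  by rewrite /l; ring.
move=> h.
have cc0 : 0 <= c * c^* := mul_conjC_ge0 c.
have b2 : 0 < b + 2 by rewrite ltr_wpDl.
have : c * c^* <= 0.
  by rewrite -(pmulr_lle0 _ b2) -oppr_ge0 -mulrN.
move=> h2; have : c * c^* == 0 by rewrite eq_le h2 cc0.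
by rewrite mul_conjC_eq0 /c !mxE; move/eqP.
Qed.


Lemma col_mul p q r (A : 'M[C]_(p,q)) (B : 'M[C]_(q,r)) j :
  col j (A *m B) = A *m col j B.
Proof. by rewrite !colE mulmxA. Qed.

Lemma entry3 p q r s (A : 'M[C]_(p,q)) (B : 'M[C]_(q,r)) (D : 'M[C]_(r,s)) i j :
  (A *m B *m D) i j = (row i A *m B *m col j D) 0 0.
Proof.
by rewrite -row_mul -col_mul -row_mul !mxE.
Qed.

Definition hproj p (E : 'M[C]_p) := herm_mx E /\ E *m E = E.

Lemma tr_proj_fo p (E rho : 'M[C]_p) : hproj E ->
  \tr (E *m rho) = \sum_i fo rho (col i E) (col i E).
Proof.
move=> [hE idE].
rewrite -{1}idE -mulmxA mxtrace_mulC /mxtrace; apply: eq_bigr => i _.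
rewrite entry3 /fo; congr ((_ *m _ *m _) 0 0).
by rewrite -{1}hE; apply/matrixP=> x y; rewrite !mxE.
Qed.

Lemma tr_proj_ge0 p (E rho : 'M[C]_p) : hproj E -> psd_mx rho -> 0 <= \tr (E *m rho).
Proof.
move=> hE [hr pr]; rewrite tr_proj_fo //; apply: sumr_ge0 => i _; exact: pr.
Qed.

Lemma tr_proj_0 p (E rho : 'M[C]_p) : hproj E -> psd_mx rho -> \tr (E *m rho) = 0 ->
  rho *m E = 0 /\ E *m rho = 0.
Proof.
move=> hE prho; rewrite tr_proj_fo // => h0.
have r0 : rho *m E = 0.
  apply/matrixP=> k i.
  have := psumr_eq0P (fun i _ => prho.2 (col i E)) h0 (i:=i) isT.
  move/(psd_null prho) => h.
  have : (col i (rho *m E)) k 0 = 0 by rewrite col_mul h mxE.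
  by rewrite mxE => ->; rewrite mxE.
split=> //.
by rewrite -[E](proj1 hE) -[rho](proj1 prho) -adjmxM r0; apply/matrixP=> x y; rewrite !mxE conjC0.
Qed.

End Gen.

Section Tens.
Variable C : numClosedFieldType.
Variables n m : nat.
Local Notation T := (tidx n m).
Local Notation ev a := (enum_val a : T).

Lemma tensE (X : 'I_m -> 'M[C]_n) a b :
  tens X a b = \prod_(l < m) X l (ev a l) (ev b l).
Proof. by rewrite mxE. Qed.

Lemma sum_tidx (F : T -> C) : \sum_(b < tdim n m) F (ev b) = \sum_(f : T) F f.
Proof. by rewrite (big_enum_val F). Qed.

Lemma tens_ext (X Y : 'I_m -> 'M[C]_n) : (forall l, X l = Y l) -> tens X = tens Y.
Proof. by move=> h; apply/matrixP=> a b; rewrite !tensE; apply: eq_bigr=> l _; rewrite h. Qed.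

Lemma tensM (X Y : 'I_m -> 'M[C]_n) : tens X *m tens Y = tens (fun l => X l *m Y l).
Proof.
apply/matrixP=> a c; rewrite !mxE.
under eq_bigr do rewrite !tensE -big_split /=.
rewrite (sum_tidx (fun f => \prod_(i < m) (X i (ev a i) (f i) * Y i (f i) (ev c i)))).
rewrite -(bigA_distr_bigA (fun i j => X i (ev a i) j * Y i j (ev c i))) /=.
by apply: eq_bigr=> l _; rewrite mxE.
Qed.

Lemma tens1 : tens (fun _ : 'I_m => 1%:M : 'M[C]_n) = 1%:M.
Proof.
apply/matrixP=> a b; rewrite tensE [RHS]mxE.
have [->|ab] := eqVneq a b.
  by rewrite big1 // => l _; rewrite mxE eqxx.
have : ~~ [forall l, ev a l == ev b l].
  apply: contra ab => /forallP h; apply/eqP/enum_val_inj/ffunP => l; exact/eqP/h.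
rewrite negb_forall => /existsP [l hl].
by rewrite (bigD1 l) //= mxE (negbTE hl) mul0r.
Qed.

Lemma tens_sum K (F : 'I_m -> 'I_K -> 'M[C]_n) :
  tens (fun l => \sum_j F l j) = \sum_(t : {ffun 'I_m -> 'I_K}) tens (fun l => F l (t l)).
Proof.
apply/matrixP=> a b; rewrite tensE summxE.
under eq_bigr do rewrite summxE.
rewrite (bigA_distr_bigA (fun l j => F l j (ev a l) (ev b l))) /=.
by apply: eq_bigr => t _; rewrite tensE.
Qed.

Lemma tensZ (c : 'I_m -> C) (X : 'I_m -> 'M[C]_n) :
  tens (fun l => c l *: X l) = (\prod_l c l) *: tens X.
Proof.
apply/matrixP=> a b; rewrite [RHS]mxE !tensE -big_split /=.
by apply: eq_bigr => l _; rewrite mxE.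
Qed.

Lemma tens_adj (X : 'I_m -> 'M[C]_n) : adjmx (tens X) = tens (fun l => adjmx (X l)).
Proof.
apply/matrixP=> a b; rewrite adjmxE !tensE rmorph_prod.
by apply: eq_bigr => l _; rewrite adjmxE.
Qed.

Lemma tens0 (X : 'I_m -> 'M[C]_n) l0 : X l0 = 0 -> tens X = 0.
Proof.
move=> h; apply/matrixP=> a b; rewrite tensE (bigD1 l0) //= h !mxE mul0r.
by [].
Qed.

End Tens.

Section Spec.
Variable C : numClosedFieldType.
Variables n m K : nat.
Variable P : 'I_K -> 'M[C]_n.
Hypothesis hP : forall j, orth_proj (P j).
Hypothesis hO : forall i j, i != j -> P i *m P j = 0.
Hypothesis hS : \sum_j P j = 1%:M.
Local Notation FT := {ffun 'I_m -> 'I_K}.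

Definition Tt (t : FT) : 'M[C]_(tdim n m) := tens (fun l => P (t l)).

Lemma TtM t u : Tt t *m Tt u = if t == u then Tt t else 0.
Proof.
rewrite /Tt tensM; have [<-|tu] := eqVneq t u.
  by apply: tens_ext => l; rewrite (proj2 (hP _)).
have : ~~ [forall l, t l == u l].
  apply: contra tu => /forallP h; apply/eqP/ffunP => l; exact/eqP/h.
rewrite negb_forall => /existsP [l hl].
exact: (tens0 (l0 := l) (hO hl)).
Qed.

Lemma Tt_proj t : hproj (Tt t).
Proof.
split; last by rewrite TtM eqxx.
rewrite /herm_mx /Tt tens_adj; apply: tens_ext => l; exact: (proj1 (hP _)).
Qed.

Lemma sumTt : \sum_t Tt t = 1%:M.
Proof.
rewrite -tens1 -(tens_ext (X := fun l => \sum_j P j)) //.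
by rewrite tens_sum.
Qed.

Lemma mulsum (a b : FT -> C) :
  (\sum_t a t *: Tt t) *m (\sum_u b u *: Tt u) = \sum_t (a t * b t) *: Tt t.
Proof.
rewrite mulmx_suml; apply: eq_bigr => t _.
rewrite mulmx_sumr (bigD1 t) //= big1 ?addr0.
  by rewrite -scalemxAl -scalemxAr TtM eqxx scalerA.
move=> u ut; rewrite -scalemxAl -scalemxAr TtM eq_sym (negbTE ut).
by rewrite !scaler0.
Qed.

Lemma trE (a : FT -> C) rho :
  \tr ((\sum_t a t *: Tt t) *m rho) = \sum_t a t * \tr (Tt t *m rho).
Proof.
rewrite mulmx_suml linear_sum /=; apply: eq_bigr => t _.
by rewrite -scalemxAl mxtraceZ.
Qed.

Lemma slotE j k : slot (P j) k = \sum_(t : FT) (t k == j)%:R *: Tt t.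
Proof.
rewrite /slot.
rewrite (tens_ext (Y := fun l => \sum_j' ((if l == k then (j' == j)%:R else 1) *: P j'))).
  rewrite tens_sum; apply: eq_bigr => t _; rewrite tensZ; congr (_ *: _).
  rewrite (bigD1 k) //= eqxx big1 ?mulr1 // => l /negbTE ->; done.
move=> l; case: eqP => _.
  rewrite (bigD1 j) //= eqxx scale1r big1 ?addr0 // => j' /negbTE ->.
  by rewrite scale0r.
by rewrite -hS; apply: eq_bigr => j' _; rewrite scale1r.
Qed.


Variable l0 : 'I_m.
Definition cstf (j : 'I_K) : FT := [ffun=> j].
Definition cst (t : FT) := [exists j, t == cstf j].

Lemma cstf_inj : injective cstf.
Proof. by move=> i j /ffunP /(_ l0); rewrite !ffunE. Qed.

Lemma cst_sum t : ((cst t)%:R : C) = \sum_j (t == cstf j)%:R.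
Proof.
rewrite /cst; case: existsP => [[j0 /eqP ->]|hn].
  rewrite (bigD1 j0) //= eqxx big1 ?addr0 // => j hj.
  by rewrite (inj_eq cstf_inj) eq_sym (negbTE hj).
by rewrite big1 // => j _; case: eqP => // ht; case: hn; exists j; apply/eqP.
Qed.

Lemma PiE : Pi_sym m P = \sum_t (cst t)%:R *: Tt t.
Proof.
under [RHS]eq_bigr do rewrite cst_sum scaler_suml.
rewrite exchange_big /=; apply: eq_bigr => j _.
rewrite (bigD1 (cstf j)) //= eqxx scale1r big1 ?addr0.
  by apply: tens_ext => l; rewrite ffunE.
by move=> t /negbTE ->; rewrite scale0r.
Qed.

End Spec.

Lemma bool_coef (C : numClosedFieldType) (x y : bool) :
  (y%:R - x%:R * y%:R : C) = (y && ~~ x)%:R.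
Proof. by case: x; case: y; rewrite /= ?mul1r ?mul0r ?subrr ?subr0. Qed.

Lemma trueR (C : numClosedFieldType) : (true%:R : C) = 1. Proof. by []. Qed.
Lemma falseR (C : numClosedFieldType) : (false%:R : C) = 0. Proof. by []. Qed.

Lemma adjmxN (C : numClosedFieldType) p (A : 'M[C]_p) : adjmx (- A) = - adjmx A.
Proof. by apply/matrixP=> i j; rewrite !mxE rmorphN. Qed.

Theorem proposition4 (C : numClosedFieldType) (n m K : nat)
  (sigma : 'M[C]_n) (s : 'I_K -> C) (P : 'I_K -> 'M[C]_n)
  (rho : 'M[C]_(tdim n m)) :
  (2 <= n)%N -> (2 <= m)%N ->
  herm_mx sigma ->
  spectral_decomp sigma s P ->
  density_mx rho ->
  (sigmaSMC P rho <-> \tr (Pi_sym m P *m rho) = 1) /\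
  (\tr (Pi_sym m P *m rho) = 1 <->
     (Pi_sym m P *m rho *m Pi_sym m P = rho /\ Pi_sym m P *m rho = rho)).
Proof.
move=> _ hm _ [_ hPj hO hS _] [prho trho].
have hP : forall j, orth_proj (P j) by move=> j; exact: (hPj j).1.
have m0 : (0 < m)%N by apply: leq_trans hm.
pose l0 := Ordinal m0.
pose w t := \tr (Tt P t *m rho).
have w0 : forall t, 0 <= w t by move=> t; apply: tr_proj_ge0 => //; exact: Tt_proj.
have sw : \sum_t w t = 1.
  rewrite -trho -[rho in RHS]mul1mx -(sumTt m hS) mulmx_suml linear_sum.
  done.
have trPi : \tr (Pi_sym m P *m rho) = \sum_t (cst t)%:R * w t.
  by rewrite (PiE P l0) trE.
have smcE : forall k l j,
    (\tr (slot (P j) k *m slot (P j) l *m rho) = \tr (slot (P j) l *m rho)) <->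
    \sum_(t : {ffun 'I_m -> 'I_K}) ((t l == j) && (t k != j))%:R * w t = 0.
  move=> k l j.
  rewrite !(slotE hS) (mulsum hP hO) !trE.
  have -> : \sum_(t : {ffun 'I_m -> 'I_K}) ((t l == j) && (t k != j))%:R * w t =
     \sum_(t : {ffun 'I_m -> 'I_K}) (t l == j)%:R * w t - \sum_(t : {ffun 'I_m -> 'I_K}) ((t k == j)%:R * (t l == j)%:R) * w t.
    by rewrite -sumrB; apply: eq_bigr => t _; rewrite -mulrBl bool_coef.
  split; first by move=> ->; rewrite subrr.
  by move/eqP; rewrite subr_eq0 => /eqP ->.
split.
  rewrite trPi; split.
    move=> hsmc; rewrite -[in RHS]sw; apply: eq_bigr => t _.
    case ct: (cst t); first by rewrite trueR mul1r.
    rewrite falseR mul0r.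
    have [k hk] : exists k, t k != t l0.
      apply/existsP; move/negbT: ct; apply: contraR; rewrite negb_exists => /forallP h.
      apply/existsP; exists (t l0); apply/eqP/ffunP => k; rewrite ffunE.
      by move: (h k); rewrite negbK => /eqP.
    have := (smcE k l0 (t l0)).1 (hsmc k l0 (t l0)).
    move/psumr_eq0P => h.
    have := h (fun u _ => mulr_ge0 (ler0n _ _) (w0 u)) t isT.
    by rewrite eqxx hk /= mul1r => ->.
  move=> h1 k l j; apply/(smcE k l j).
  have hz : \sum_t (~~ cst t)%:R * w t = 0.
    have : \sum_t w t - \sum_t (cst t)%:R * w t = 0 by rewrite h1 sw subrr.
    rewrite -sumrB => h0; rewrite -[RHS]h0; apply: eq_bigr => t _.
    by case: (cst t); rewrite /= ?trueR ?falseR ?mul1r ?mul0r ?subrr ?subr0.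
  apply: big1 => t _.
  case ht: ((t l == j) && (t k != j)); last by rewrite falseR mul0r.
  have nc : ~~ cst t.
    apply/existsP => -[i /eqP hi].
    move/andP: ht => [/eqP hl /negP]; apply.
    by rewrite -hl hi !ffunE.
  have := psumr_eq0P (fun u _ => mulr_ge0 (ler0n _ _) (w0 u)) hz (i := t) isT.
  by rewrite nc.
set Pi := Pi_sym m P.
have hPi : hproj Pi.
  split.
    rewrite /herm_mx /Pi (PiE P l0) adjmx_sum; apply: eq_bigr => t _.
    by rewrite adjmxZ conjC_nat (proj1 (Tt_proj hP hO t)).
  rewrite /Pi (PiE P l0) (mulsum hP hO); apply: eq_bigr => t _.
  by case: (cst t); rewrite ?trueR ?falseR ?mul1r ?mul0r.
have hE : hproj (1%:M - Pi).
  split.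
    rewrite /herm_mx adjmxD adjmxN adjmx1 (proj1 hPi) //.
  by rewrite mulmxBl !mulmxBr !mul1mx mulmx1 (proj2 hPi) subrr subr0.
split.
  move=> h1.
  have : \tr ((1%:M - Pi) *m rho) = 0 by rewrite mulmxBl mul1mx linearB /= trho h1 subrr.
  case/(tr_proj_0 hE prho) => h2 h3.
  have e1 : rho *m Pi = rho by apply/eqP; rewrite eq_sym -subr_eq0 -[X in X - _]mulmx1 -mulmxBr h2.
  have e2 : Pi *m rho = rho by apply/eqP; rewrite eq_sym -subr_eq0 -[X in X - _]mul1mx -mulmxBl h3.
  by rewrite e2 e1.
by case=> _ ->.
Qed.
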